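(* Let $f:D^n\to\mathbb R$. The Lovász extension $f^L:[-\alpha,1]^n\to\mathbb R$ of $f$ is convex if and only if $f$ is $\alpha$-bisubmodular.
   Context: Fix $\alpha\in(0,1]$ and $D=\{-\alpha,0,1\}\subset\mathbb R$. Define the partial order $\preceq$ on $D$ by $0\preceq 1$, $0\preceq -\alpha$ (plus reflexivity), with $1$ and $-\alpha$ incomparable; extend it componentwise to $D^n$. Define $\wedge_0$ on $D$ by $1\wedge_0(-\alpha)=(-\alpha)\wedge_0 1=0$ and $x\wedge_0 y=\min(x,y)$ w.r.t. $\preceq$ if $\{x,y\}\ne\{-\alpha,1\}$; for $a\in D$ define $\vee_a$ by $1\vee_a(-\alpha)=(-\alpha)\vee_a 1=a$ and $x\vee_a y=\max(x,y)$ w.r.t. $\preceq$ if $\{x,y\}\ne\{-\alpha,1\}$; extend componentwise to $D^n$. $f:D^n\to\mathbb R$ is $\alpha$-bisubmodular if for all $\mathbf a,\mathbf b\in D^n$: $f(\mathbf a\wedge_0\mathbf b)+\alpha f(\mathbf a\vee_0\mathbf b)+(1-\alpha)f(\mathbf a\vee_1\mathbf b)\le f(\mathbf a)+f(\mathbf b)$. For $\mathbf x\in[-\alpha,1]^n$, $\mathcal P(\mathbf x)$ is the set of $\lambda:D^n\to[0,1]$ with $\sum_{\mathbf a}\lambda(\mathbf a)=1$ and $\sum_{\mathbf a}\lambda(\mathbf a)\mathbf a=\mathbf x$. For each $\mathbf x$ there is a unique $\lambda_{\mathbf x}\in\mathcal P(\mathbf x)$ whose support is a chain w.r.t. $\preceq$;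 the Lovász extension is $f^L(\mathbf x)=\sum_{\mathbf a\in D^n}\lambda_{\mathbf x}(\mathbf a)f(\mathbf a)$. *)

(* Defs.v *)
From HB Require Import structures.
From mathcomp Require Import all_boot all_order all_algebra.
From Stdlib Require Import ClassicalEpsilon.
Set Implicit Arguments. Unset Strict Implicit. Unset Printing Implicit Defensive.
Import Order.TTheory GRing.Theory Num.Theory.
Local Open Scope ring_scope.

(* The three-element set D = {-alpha, 0, 1}, encoded as option bool:
   None = 0, Some true = 1, Some false = -alpha. *)
Definition D := option bool.
Definition D0 : D := None.
Definition D1 : D := Some true.
Definition Dm : D := Some false.

Definition dval (R : realFieldType) (alpha : R) (d : D) : R :=
  match d with None => 0 | Some true => 1 | Some false => - alpha end.

Definition dle (d e : D) : bool := (d == D0) || (d == e).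

Definition dmeet (d e : D) : D := if d == e then d else D0.
Definition djoin (a : D) (d e : D) : D :=
  if d == D0 then e else if e == D0 then d else if d == e then d else a.

Definition vec (n : nat) := {ffun 'I_n -> D}.

Definition vle n (a b : vec n) : bool := [forall i, dle (a i) (b i)].
Definition vmeet n (a b : vec n) : vec n := [ffun i => dmeet (a i) (b i)].
Definition vjoin n (c : D) (a b : vec n) : vec n := [ffun i => djoin c (a i) (b i)].

Definition bisubmodular (R : realFieldType) (alpha : R) n (f : vec n -> R) : Prop :=
  forall a b : vec n,
    f (vmeet a b) + alpha * f (vjoin D0 a b) + (1 - alpha) * f (vjoin D1 a b)
    <= f a + f b.

Definition inP (R : realFieldType) (alpha : R) n (x : 'I_n -> R)
  (lam : {ffun vec n -> R}) : Prop :=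
  (forall a, 0 <= lam a <= 1) /\
  \sum_(a : vec n) lam a = 1 /\
  (forall i : 'I_n, \sum_(a : vec n) lam a * dval alpha (a i) = x i).

Definition chain_support (R : realFieldType) n (lam : {ffun vec n -> R}) : Prop :=
  forall a b : vec n, lam a != 0 -> lam b != 0 -> vle a b || vle b a.

(* lambda_x : the (unique, for x in the box) chain-supported element of P(x) *)
Definition lambda_x (R : realFieldType) (alpha : R) n (x : 'I_n -> R)
  : {ffun vec n -> R} :=
  epsilon (inhabits [ffun=> 0])
    (fun lam => inP alpha x lam /\ chain_support lam).

Definition lovasz (R : realFieldType) (alpha : R) n (f : vec n -> R)
  (x : 'I_n -> R) : R :=
  \sum_(a : vec n) lambda_x alpha x a * f a.

Definition in_box (R : realFieldType) (alpha : R) n (x : 'I_n -> R) : Prop :=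
  forall i, - alpha <= x i <= 1.

Definition convex_on_box (R : realFieldType) (alpha : R) n (g : ('I_n -> R) -> R)
  : Prop :=
  forall (x y : 'I_n -> R) (t : R), in_box alpha x -> in_box alpha y ->
    0 <= t <= 1 ->
    g (fun i => t * x i + (1 - t) * y i) <= t * g x + (1 - t) * g y.

(* Main.v *)
Require Import Defs.
From mathcomp Require Import all_boot all_order all_algebra.
From mathcomp Require Import ring lra.
From Stdlib Require Import ClassicalEpsilon.
Set Implicit Arguments. Unset Strict Implicit. Unset Printing Implicit Defensive.
Import Order.TTheory GRing.Theory Num.Theory.
Local Open Scope ring_scope.

Lemma dlin (R : realFieldType) (alpha : R) (d e : D) :
  dval alpha (dmeet d e) + alpha * dval alpha (djoin D0 d e)
  + (1 - alpha) * dval alpha (djoin D1 d e) = dval alpha d + dval alpha e.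
Proof. by case: d => [[]|]; case: e => [[]|]; rewrite /dmeet /djoin /=; ring. Qed.

Lemma dle_meet_join d e : dle d e -> dmeet d e = d /\ forall z, djoin z d e = e.
Proof. by case: d => [[]|]; case: e => [[]|]. Qed.

Lemma dle_refl d : dle d d.
Proof. by case: d => [[]|]. Qed.

Lemma dle_full d e : e != D0 ->
  [/\ dle (dmeet d e) e, dle (djoin D0 d e) e,
      djoin D1 (djoin D1 d e) e = djoin D1 d e,
      dle (dmeet (djoin D1 d e) e) e & dle (djoin D0 (djoin D1 d e) e) e].
Proof. by case: d => [[]|]; case: e => [[]|]. Qed.

Lemma dle_chain3 d e :
  [/\ dle (dmeet d e) (djoin D0 d e), dle (dmeet d e) (djoin D1 d e)
    & dle (djoin D0 d e) (djoin D1 d e)].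
Proof. by case: d => [[]|]; case: e => [[]|]. Qed.

Lemma dval_split (R : realFieldType) (alpha : R) d :
  dval alpha d = (d == D1)%:R - alpha * (d == Dm)%:R.
Proof. by case: d => [[]|] /=; ring. Qed.

Lemma dval_bounds (R : realFieldType) (alpha : R) d : 0 < alpha -> alpha <= 1 ->
  - alpha <= dval alpha d <= 1.
Proof. by move=> ha ha1; case: d => [[]|] /=; apply/andP; split; lra. Qed.

Lemma ex_argmin (R : realFieldType) (I : finType) (P : pred I) (F : I -> R) i0 :
  P i0 -> exists i, P i /\ forall j, P j -> F i <= F j.
Proof. move=> Pi0; case: (arg_minP F Pi0) => i Pi H; by exists i. Qed.

Lemma sum_neq0_ex (R : realFieldType) (I : finType) (F : I -> R) :
  \sum_i F i != 0 -> exists i, F i != 0.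
Proof.
move=> H; apply/existsP; apply: contraNT H; rewrite negb_exists => /forallP H.
by apply/eqP; apply: big1 => i _; apply/eqP; move: (H i); rewrite negbK.
Qed.

Definition Pm (R : realFieldType) n (lam : {ffun vec n -> R}) (i : 'I_n) (d : D) :=
  \sum_(b : vec n) lam b * (b i == d)%:R.
Definition Um (R : realFieldType) n (lam : {ffun vec n -> R}) (a : vec n) :=
  \sum_(b : vec n) lam b * (vle a b)%:R.

Lemma inP_ge0 (R : realFieldType) (alpha : R) n x (lam : {ffun vec n -> R}) :
  inP alpha x lam -> forall b, 0 <= lam b.
Proof. by case=> H _ b; case/andP: (H b). Qed.

Lemma Pm_ge0 (R : realFieldType) (alpha : R) n x (lam : {ffun vec n -> R}) i d :
  inP alpha x lam -> 0 <= Pm lam i d.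
Proof. by move=> H; apply: sumr_ge0 => b _; apply: mulr_ge0 (inP_ge0 H b) _. Qed.

Lemma mean_split (R : realFieldType) (alpha : R) n x (lam : {ffun vec n -> R}) i :
  inP alpha x lam -> x i = Pm lam i D1 - alpha * Pm lam i Dm.
Proof.
case=> _ [_ H]; rewrite -H /Pm mulr_sumr -sumrB; apply: eq_bigr => b _.
by rewrite dval_split; ring.
Qed.

Lemma Pm_excl (R : realFieldType) n (lam : {ffun vec n -> R}) i :
  chain_support lam -> Pm lam i D1 = 0 \/ Pm lam i Dm = 0.
Proof.
move=> Hc; case: (boolP (Pm lam i D1 == 0)) => [/eqP|H1]; first by left.
case: (boolP (Pm lam i Dm == 0)) => [/eqP|H2]; first by right.
case: (sum_neq0_ex H1) => b; case: (sum_neq0_ex H2) => b'.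
case: (boolP (b' i == Dm)) => [/eqP e'|]; last by rewrite mulr0 eqxx.
case: (boolP (b i == D1)) => [/eqP e|]; last by rewrite mulr0 eqxx.
rewrite !mulr1 => hb' hb.
case/orP: (Hc _ _ hb hb') => /forallP /(_ i); by rewrite /dle e e'.
Qed.

Lemma Pm_eq (R : realFieldType) (alpha : R) n x (lam mu : {ffun vec n -> R}) i :
  0 < alpha ->
  inP alpha x lam -> chain_support lam -> inP alpha x mu -> chain_support mu ->
  Pm lam i D1 = Pm mu i D1 /\ Pm lam i Dm = Pm mu i Dm.
Proof.
move=> ha Hl Cl Hm Cm.
have E := mean_split i Hl; rewrite (mean_split i Hm) in E.
have p1 := Pm_ge0 i D1 Hl; have p2 := Pm_ge0 i Dm Hl.
have p3 := Pm_ge0 i D1 Hm; have p4 := Pm_ge0 i Dm Hm.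
have X1 := Pm_excl i Cl; have X2 := Pm_excl i Cm.
move: E p1 p2 p3 p4 X1 X2.
have [p ->] : exists p : R, Pm lam i D1 = p by eexists.
have [q ->] : exists p : R, Pm lam i Dm = p by eexists.
have [p' ->] : exists p : R, Pm mu i D1 = p by eexists.
have [q' ->] : exists p : R, Pm mu i Dm = p by eexists.
move=> E p1 p2 p3 p4 X1 X2.
have aq : 0 <= alpha * q by apply: mulr_ge0 => //; lra.
have aq' : 0 <= alpha * q' by apply: mulr_ge0 => //; lra.
have an0 : alpha != 0 by rewrite gt_eqF.
case: X1 => h1; case: X2 => h2; subst.
- split => //.
  have : alpha * (q - q') = 0 by lra.
  by move/eqP; rewrite mulf_eq0 (negbTE an0) subr_eq0 => /eqP.
- have hq : alpha * q = 0 by lra.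
  move/eqP: hq; rewrite mulf_eq0 (negbTE an0) /= => /eqP hq.
  split; lra.
- have hq : alpha * q' = 0 by lra.
  move/eqP: hq; rewrite mulf_eq0 (negbTE an0) /= => /eqP hq.
  split; lra.
- split; lra.
Qed.

Lemma vle_coord n (a b : vec n) j : vle a b -> a j != D0 -> b j = a j.
Proof.
move=> /forallP /(_ j); rewrite /dle => /orP [/eqP->|/eqP->]; first by rewrite eqxx.
by [].
Qed.

Lemma Um_le_Pm (R : realFieldType) (alpha : R) n x (lam : {ffun vec n -> R}) (a : vec n) j :
  inP alpha x lam -> a j != D0 -> Um lam a <= Pm lam j (a j).
Proof.
move=> H aj; apply: ler_sum => b _; apply: ler_wpM2l; first exact: inP_ge0 H b.
case: (boolP (vle a b)) => // /vle_coord /(_ aj) ->; by rewrite eqxx.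
Qed.

Lemma Um_min (R : realFieldType) (alpha : R) n x (lam : {ffun vec n -> R}) (a : vec n) i0 :
  inP alpha x lam -> chain_support lam -> a i0 != D0 ->
  exists i, a i != D0 /\ Um lam a = Pm lam i (a i) /\
    (forall j, a j != D0 -> Pm lam i (a i) <= Pm lam j (a j)).
Proof.
move=> H C ai0.
have [i [ai Hmin]] := ex_argmin (fun j => Pm lam j (a j)) (P := fun j => a j != D0) ai0.
exists i; split => //; split => //.
apply/eqP; rewrite eq_le (Um_le_Pm H ai) /=.
apply: ler_sum => b _.
have lb := inP_ge0 H b.
case: (boolP (lam b == 0)) => [/eqP->|lb0]; first by rewrite !mul0r.
case: (boolP (b i == a i)) => [/eqP bi|]; last by rewrite mulr0 mulr_ge0.
case: (boolP (vle a b)) => //.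
rewrite /vle negb_forall => /existsP [j]; rewrite /dle negb_or => /andP [aj0 ajb].
have : Pm lam j (a j) < Pm lam i (a i).
  rewrite -subr_gt0 /Pm -sumrB (bigD1 b) //=.
  have -> : (b j == a j) = false by apply/negbTE; rewrite eq_sym.
  rewrite bi eqxx mulr1 mulr0 subr0.
  have h1 : 0 < lam b by rewrite lt_def lb0 lb.
  have h2 : 0 <= \sum_(b' | b' != b)
     (lam b' * (b' i == a i)%:R - lam b' * (b' j == a j)%:R).
    apply: sumr_ge0 => b' _.
    case: (boolP (lam b' == 0)) => [/eqP->|lb'0]; first by rewrite !mul0r subrr.
    case: (boolP (b' j == a j)) => [/eqP bj'|]; last first.
      by rewrite mulr0 subr0 mulr_ge0 // (inP_ge0 H).
    have -> : b' i == a i.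
      case/orP: (C _ _ lb0 lb'0) => Hv.
      - by rewrite -bi; apply/eqP; apply: vle_coord Hv _; rewrite bi.
      - exfalso; have E : b j = b' j by apply: vle_coord Hv _; rewrite bj'.
        by move: ajb; rewrite E bj' eqxx.
    by rewrite subrr.
  lra.
by move: (Hmin j aj0); rewrite leNgt => /negbTE ->.
Qed.

Lemma Um_eq (R : realFieldType) (alpha : R) n x (lam mu : {ffun vec n -> R}) (a : vec n) :
  0 < alpha ->
  inP alpha x lam -> chain_support lam -> inP alpha x mu -> chain_support mu ->
  Um lam a = Um mu a.
Proof.
move=> ha Hl Cl Hm Cm.
case: (pickP [pred j | a j != D0]) => [i0 /= ai0|Hn].
- have [i [ai [Ei Mi]]] := Um_min Hl Cl ai0.
  have [j [aj [Ej Mj]]] := Um_min Hm Cm ai0.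
  have PE : forall k, a k != D0 -> Pm lam k (a k) = Pm mu k (a k).
    move=> k; have [E1 E2] := Pm_eq k ha Hl Cl Hm Cm.
    by case: (a k) => [[]|] //.
  apply/eqP; rewrite eq_le; apply/andP; split.
  + rewrite Ei Ej -PE //; apply: Mi aj.
  + rewrite Ei Ej PE //; apply: Mj ai.
- have vt : forall b, vle a b.
    move=> b; apply/forallP => k; move: (Hn k) => /= /negbFE /eqP ->.
    by rewrite /dle eqxx.
  rewrite /Um [LHS](eq_bigr (fun b => lam b)); last by move=> b _; rewrite vt mulr1.
  rewrite [RHS](eq_bigr (fun b => mu b)); last by move=> b _; rewrite vt mulr1.
  by case: Hl => _ [-> _]; case: Hm => _ [-> _].
Qed.

Lemma zeros_lt n (a b : vec n) : vle a b -> b != a ->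
  (#|[pred i | b i == D0]| < #|[pred i | a i == D0]|)%N.
Proof.
move=> Hv Hne; apply: proper_card; apply/properP; split.
- apply/subsetP => i; rewrite !inE => /eqP bi.
  move/forallP: Hv => /(_ i); rewrite /dle bi => /orP [] //.
- have : [exists i, b i != a i].
    apply: contraNT Hne; rewrite negb_exists => /forallP H.
    by apply/eqP/ffunP => i; move: (H i); rewrite negbK => /eqP.
  case/existsP => i bi; exists i; rewrite !inE.
  + move/forallP: Hv => /(_ i); rewrite /dle => /orP [] // /eqP E.
    by move: bi; rewrite E eqxx.
  + move/forallP: Hv => /(_ i); rewrite /dle => /orP [/eqP ai|/eqP E];
      last by move: bi; rewrite E eqxx.
    by apply: contra bi => /eqP ->; rewrite ai.
Qed.

Lemma lam_unique (R : realFieldType) (alpha : R) n x (lam mu : {ffun vec n -> R}) :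
  0 < alpha ->
  inP alpha x lam -> chain_support lam -> inP alpha x mu -> chain_support mu ->
  lam = mu.
Proof.
move=> ha Hl Cl Hm Cm; apply/ffunP => a.
move: {2}#|[pred i | a i == D0]| (leqnn #|[pred i | a i == D0]|) => k.
elim: k a => [|k IH] a Ha;
have E := Um_eq a ha Hl Cl Hm Cm;
rewrite /Um (bigD1 a) // [X in _ = X](bigD1 a) //= in E;
have vaa : vle a a by apply/forallP => i; exact: dle_refl.
all: rewrite vaa !mulr1 in E.
all: have S : \sum_(i | i != a) lam i * (vle a i)%:R = \sum_(i | i != a) mu i * (vle a i)%:R;
  [apply: eq_bigr => b hb; case: (boolP (vle a b)) => hv; rewrite ?mulr0 ?mulr1 //;
   have := zeros_lt hv hb | by rewrite S in E; exact: addIr E].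
- by rewrite leqn0 in Ha; rewrite (eqP Ha).
- move=> lt; apply: IH; rewrite -ltnS; exact: leq_trans lt Ha.
Qed.

Definition mval (R : realFieldType) (alpha : R) n (x : 'I_n -> R) (i : 'I_n) : R :=
  if 0 <= x i then x i else - x i / alpha.
Definition sgn (R : realFieldType) n (x : 'I_n -> R) (i : 'I_n) : D :=
  if 0 <= x i then D1 else Dm.
Definition ordl (R : realFieldType) (alpha : R) n (x : 'I_n -> R) : seq 'I_n :=
  sort (fun i j : 'I_n => mval alpha x j <= mval alpha x i) (enum 'I_n).
Definition pos (R : realFieldType) (alpha : R) n (x : 'I_n -> R) (i : 'I_n) : nat :=
  index i (ordl alpha x).
Definition cch (R : realFieldType) (alpha : R) n (x : 'I_n -> R) (k : nat) : vec n :=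
  [ffun i => if (pos alpha x i < k)%N then sgn x i else D0].
Definition MM (R : realFieldType) (alpha : R) n (x : 'I_n -> R) (k : nat) : R :=
  nth 0 (1 :: map (mval alpha x) (ordl alpha x)) k.
Definition ww (R : realFieldType) (alpha : R) n (x : 'I_n -> R) (k : nat) : R :=
  MM alpha x k - MM alpha x k.+1.
Definition lamc (R : realFieldType) (alpha : R) n (x : 'I_n -> R) : {ffun vec n -> R} :=
  [ffun a => \sum_(k < n.+1) ww alpha x k * (a == cch alpha x k)%:R].

Lemma size_ordl (R : realFieldType) (alpha : R) n (x : 'I_n -> R) :
  size (ordl alpha x) = n.
Proof. by rewrite size_sort size_enum_ord. Qed.

Lemma uniq_ordl (R : realFieldType) (alpha : R) n (x : 'I_n -> R) :
  uniq (ordl alpha x).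
Proof. by rewrite sort_uniq enum_uniq. Qed.

Lemma mem_ordl (R : realFieldType) (alpha : R) n (x : 'I_n -> R) i :
  i \in ordl alpha x.
Proof. by rewrite mem_sort mem_enum. Qed.

Lemma pos_lt (R : realFieldType) (alpha : R) n (x : 'I_n -> R) i :
  (pos alpha x i < n)%N.
Proof. by have := index_mem i (ordl alpha x); rewrite mem_ordl size_ordl. Qed.

Lemma nth_pos (R : realFieldType) (alpha : R) n (x : 'I_n -> R) i j0 :
  nth j0 (ordl alpha x) (pos alpha x i) = i.
Proof. by rewrite /pos nth_index // mem_ordl. Qed.

Lemma pos_inj (R : realFieldType) (alpha : R) n (x : 'I_n -> R) i j :
  pos alpha x i = pos alpha x j -> i = j.
Proof. by move=> E; rewrite -(nth_pos alpha x i i) E nth_pos. Qed.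

Lemma pos_nth (R : realFieldType) (alpha : R) n (x : 'I_n -> R) k j0 :
  (k < n)%N -> pos alpha x (nth j0 (ordl alpha x) k) = k.
Proof. by move=> hk; rewrite /pos index_uniq ?uniq_ordl // size_ordl. Qed.

Lemma mval_bounds (R : realFieldType) (alpha : R) n (x : 'I_n -> R) i :
  0 < alpha -> in_box alpha x -> 0 <= mval alpha x i <= 1.
Proof.
move=> ha /(_ i) /andP [h1 h2]; rewrite /mval.
case: ifP => h; first by rewrite h h2.
have hn : x i < 0 by rewrite ltNge h.
apply/andP; split.
- by apply: divr_ge0; [rewrite oppr_ge0 ltW | rewrite ltW].
- rewrite ler_pdivrMr // mul1r; lra.
Qed.

Lemma MM_pos (R : realFieldType) (alpha : R) n (x : 'I_n -> R) i :
  MM alpha x (pos alpha x i).+1 = mval alpha x i.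
Proof.
rewrite /MM /= (nth_map i) ?nth_pos // size_ordl; exact: pos_lt.
Qed.

Lemma MM0 (R : realFieldType) (alpha : R) n (x : 'I_n -> R) : MM alpha x 0 = 1.
Proof. by []. Qed.

Lemma MMn (R : realFieldType) (alpha : R) n (x : 'I_n -> R) : MM alpha x n.+1 = 0.
Proof. by rewrite /MM /= nth_default // size_map size_ordl. Qed.

Lemma ww_ge0 (R : realFieldType) (alpha : R) n (x : 'I_n -> R) k :
  0 < alpha -> in_box alpha x -> 0 <= ww alpha x k.
Proof.
move=> ha hb; rewrite /ww subr_ge0.
set s := 1 :: map (mval alpha x) (ordl alpha x).
have Hs : sorted (fun u v : R => v <= u) s.
  rewrite /s /= path_sortedE; last by move=> u v w h1 h2; exact: le_trans h2 h1.
  apply/andP; split.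
  - apply/allP => v /mapP [i _ ->]; by case/andP: (mval_bounds i ha hb).
  - rewrite sorted_map; apply: sort_sorted => i j; exact: le_total.
have Hpos : forall m, 0 <= nth 0 s m.
  move=> m; case: (ltnP m (size s)) => hm; last by rewrite nth_default.
  move: (mem_nth 0 hm); rewrite /s inE => /orP [/eqP -> //|/mapP [i _ ->]].
  by case/andP: (mval_bounds i ha hb).
case: (ltnP k.+1 (size s)) => hk; last by rewrite /MM -/s (nth_default 0 hk) Hpos.
rewrite /MM -/s.
have tr : transitive (fun u v : R => v <= u) by move=> u v w h1 h2; exact: le_trans h2 h1.
have rf : reflexive (fun u v : R => v <= u) by move=> u.
apply: (sorted_leq_nth tr rf 0 Hs); rewrite ?inE //.
exact: ltn_trans (ltnSn k) hk.
Qed.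

Lemma sum_delta (R : realFieldType) n (g : vec n -> R) (c : vec n) (w : R) :
  \sum_(a : vec n) w * (a == c)%:R * g a = w * g c.
Proof.
rewrite (bigD1 c) //= eqxx mulr1 big1 ?addr0 // => a /negbTE ->.
by rewrite mulr0 mul0r.
Qed.

Lemma sum_lamc (R : realFieldType) (alpha : R) n (x : 'I_n -> R) (g : vec n -> R) :
  \sum_(a : vec n) lamc alpha x a * g a = \sum_(k < n.+1) ww alpha x k * g (cch alpha x k).
Proof.
under eq_bigr => a _ do rewrite ffunE mulr_suml.
rewrite exchange_big /=; apply: eq_bigr => k _; exact: sum_delta.
Qed.

Lemma sum_ww (R : realFieldType) (alpha : R) n (x : 'I_n -> R) :
  \sum_(k < n.+1) ww alpha x k = 1.
Proof.
have := telescope_sumr (MM alpha x) (leq0n n.+1).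
rewrite big_mkord MMn MM0 sub0r => E.
rewrite /ww -[LHS]opprK -sumrN.
under eq_bigr => k _ do rewrite opprB.
by rewrite E opprK.
Qed.

Lemma sum_ww_tail (R : realFieldType) (alpha : R) n (x : 'I_n -> R) p :
  (p < n.+1)%N ->
  \sum_(k < n.+1) ww alpha x k * (p < k)%:R = MM alpha x p.+1.
Proof.
move=> hp.
rewrite -(big_mkord xpredT (fun k => ww alpha x k * (p < k)%:R)).
rewrite (big_cat_nat (n := p.+1)) //=.
rewrite big_nat_cond big1 ?add0r; last first.
  by move=> k /andP [/andP [_ hk] _]; rewrite ltnNge -ltnS hk mulr0.
rewrite (eq_big_nat _ _ (F2 := ww alpha x)); last first.
  by move=> k /andP [hk _]; rewrite hk mulr1.
have := telescope_sumr (MM alpha x) hp.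
rewrite MMn sub0r => E.
rewrite /ww -[LHS]opprK -sumrN.
under eq_bigr => k _ do rewrite opprB.
by rewrite E opprK.
Qed.

Lemma cch_le (R : realFieldType) (alpha : R) n (x : 'I_n -> R) k k' :
  (k <= k')%N -> vle (cch alpha x k) (cch alpha x k').
Proof.
move=> hk; apply/forallP => i; rewrite !ffunE /dle.
case: ifP => h; last by rewrite eqxx.
by rewrite (leq_trans h hk) eqxx orbT.
Qed.

Lemma lamc_supp (R : realFieldType) (alpha : R) n (x : 'I_n -> R) (a : vec n) :
  lamc alpha x a != 0 -> exists k, a = cch alpha x k.
Proof.
rewrite ffunE => /sum_neq0_ex [k]; case: (boolP (a == cch alpha x k)) => [/eqP ->|].
  by exists k.
by rewrite mulr0 eqxx.
Qed.

Lemma lamc_inP (R : realFieldType) (alpha : R) n (x : 'I_n -> R) :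
  0 < alpha -> in_box alpha x -> inP alpha x (lamc alpha x) /\ chain_support (lamc alpha x).
Proof.
move=> ha hb; split; last first.
  move=> a b /lamc_supp [k ->] /lamc_supp [k' ->].
  by case: (leqP k k') => h; [rewrite cch_le | rewrite orbC cch_le // ltnW].
split; [|split].
- move=> a; rewrite ffunE; apply/andP; split.
  + apply: sumr_ge0 => k _; apply: mulr_ge0 => //; exact: ww_ge0.
  + rewrite -[X in _ <= X](sum_ww alpha x); apply: ler_sum => k _.
    have := ww_ge0 k ha hb.
    by case: (a == cch alpha x k) => /= h; rewrite ?mulr1n ?mulr0n ?mulr1 ?mulr0 ?lexx.
- have := sum_lamc alpha x (fun _ => 1).
  under eq_bigr => a _ do rewrite mulr1.
  move=> ->; under eq_bigr => k _ do rewrite mulr1.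
  exact: sum_ww.
- move=> i; rewrite (sum_lamc alpha x (fun a => dval alpha (a i))).
  have Ek : forall k : 'I_n.+1, ww alpha x k * dval alpha (cch alpha x k i) =
      ww alpha x k * (pos alpha x i < k)%N%:R * dval alpha (sgn x i).
    move=> k; rewrite ffunE; case: (pos alpha x i < k)%N;
    by rewrite /= ?mulr1n ?mulr0n ?mulr1 ?mulr0 ?mul0r.
  under eq_bigr => k _ do rewrite Ek.
  rewrite -mulr_suml sum_ww_tail ?(ltn_trans (pos_lt alpha x i)) // MM_pos.
  rewrite /mval /sgn; case: ifP => h /=; first by rewrite mulr1.
  have an0 : alpha != 0 by rewrite gt_eqF.
  by field.
Qed.

Definition vzero n : vec n := [ffun=> D0].
Definition dot (R : realFieldType) (alpha : R) n (y : 'I_n -> R) (a : vec n) : R :=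
  \sum_i y i * dval alpha (a i).
Definition yg (R : realFieldType) (alpha : R) n (f : vec n -> R) (x : 'I_n -> R) i : R :=
  (f (cch alpha x (pos alpha x i).+1) - f (cch alpha x (pos alpha x i)))
  / dval alpha (sgn x i).

Lemma dot_lin (R : realFieldType) (alpha : R) n (y : 'I_n -> R) (a b : vec n) :
  dot alpha y (vmeet a b) + alpha * dot alpha y (vjoin D0 a b)
  + (1 - alpha) * dot alpha y (vjoin D1 a b) = dot alpha y a + dot alpha y b.
Proof.
rewrite /dot !mulr_sumr -!big_split; apply: eq_bigr => i _ /=.
rewrite !ffunE -mulrDr -(dlin alpha (a i) (b i)); ring.
Qed.

Lemma dot0 (R : realFieldType) (alpha : R) n (y : 'I_n -> R) : dot alpha y (vzero n) = 0.
Proof. by rewrite /dot big1 // => i _; rewrite ffunE /= mulr0. Qed.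

Lemma cch0 (R : realFieldType) (alpha : R) n (x : 'I_n -> R) : cch alpha x 0 = vzero n.
Proof. by apply/ffunP => i; rewrite !ffunE. Qed.

Lemma cch_stable (R : realFieldType) (alpha : R) n (x : 'I_n -> R) k :
  (n <= k)%N -> cch alpha x k.+1 = cch alpha x k.
Proof.
move=> hk; apply/ffunP => i; rewrite !ffunE.
have h := pos_lt alpha x i.
by rewrite (leq_trans h hk) ltnS (ltnW (leq_trans h hk)).
Qed.

Lemma dval_sgn_neq0 (R : realFieldType) (alpha : R) n (x : 'I_n -> R) i :
  0 < alpha -> dval alpha (sgn x i) != 0.
Proof.
move=> ha; rewrite /sgn; case: ifP => _ /=; first exact: oner_neq0.
by rewrite oppr_eq0 gt_eqF.
Qed.

Lemma yg_step (R : realFieldType) (alpha : R) n (f : vec n -> R) (x : 'I_n -> R) i :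
  0 < alpha ->
  yg alpha f x i * dval alpha (sgn x i) =
  f (cch alpha x (pos alpha x i).+1) - f (cch alpha x (pos alpha x i)).
Proof. by move=> ha; rewrite /yg divfK // dval_sgn_neq0. Qed.

Lemma cch_coord (R : realFieldType) (alpha : R) n (x : 'I_n -> R) k i :
  pos alpha x i != k -> cch alpha x k.+1 i = cch alpha x k i.
Proof.
by move=> h; rewrite !ffunE ltnS leq_eqVlt (negbTE h).
Qed.

Lemma cch_step (R : realFieldType) (alpha : R) n (f : vec n -> R) (x : 'I_n -> R) k :
  0 < alpha ->
  f (cch alpha x k.+1) - f (cch alpha x k) =
  dot alpha (yg alpha f x) (cch alpha x k.+1) - dot alpha (yg alpha f x) (cch alpha x k).
Proof.
move=> ha; case: (ltnP k n) => hk; last by rewrite cch_stable // !subrr.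
set i0 := nth (Ordinal hk) (ordl alpha x) k.
have pi0 : pos alpha x i0 = k by rewrite pos_nth.
rewrite /dot -sumrB (bigD1 i0) //= big1 ?addr0; last first.
  move=> i hi; rewrite cch_coord ?subrr //.
  by apply: contra hi => /eqP h; apply/eqP; apply: (pos_inj (alpha := alpha) (x := x)); rewrite h pi0.
rewrite !ffunE pi0 ltnSn ltnn /= mulr0 subr0.
by rewrite yg_step // pi0.
Qed.

Lemma cch_val (R : realFieldType) (alpha : R) n (f : vec n -> R) (x : 'I_n -> R) k :
  0 < alpha ->
  f (cch alpha x k) = f (vzero n) + dot alpha (yg alpha f x) (cch alpha x k).
Proof.
move=> ha; elim: k => [|k IH]; first by rewrite cch0 dot0 addr0.
have := cch_step f x k ha; lra.
Qed.

Lemma dmeet_d0 d : dmeet d D0 = D0. Proof. by case: d => [[]|]. Qed.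
Lemma djoin_d0 z d : djoin z d D0 = d. Proof. by case: d => [[]|]. Qed.
Lemma dle_d0 d : dle d D0 -> d = D0. Proof. by case: d => [[]|]. Qed.

Lemma below_chain (R : realFieldType) (alpha : R) n (f : vec n -> R) (x : 'I_n -> R) k :
  0 < alpha -> bisubmodular alpha f ->
  forall a : vec n, vle a (cch alpha x k) ->
  f (vzero n) + dot alpha (yg alpha f x) a <= f a.
Proof.
move=> ha Hf; elim: k => [|k IH] a Ha.
  have -> : a = vzero n.
    apply/ffunP => i; rewrite ffunE; apply: dle_d0.
    by move/forallP: Ha => /(_ i); rewrite cch0 ffunE.
  by rewrite dot0 addr0.
case: (ltnP k n) => hk; last by apply: IH; rewrite -cch_stable.
set i0 := nth (Ordinal hk) (ordl alpha x) k.
have pi0 : pos alpha x i0 = k by rewrite pos_nth.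
have Hc : forall i, i != i0 -> cch alpha x k.+1 i = cch alpha x k i.
  move=> i hi; apply: cch_coord.
  by apply: contra hi => /eqP h; apply/eqP; apply: (pos_inj (alpha := alpha) (x := x)); rewrite h pi0.
have c0 : cch alpha x k i0 = D0 by rewrite ffunE pi0 ltnn.
have c1 : cch alpha x k.+1 i0 = sgn x i0 by rewrite ffunE pi0 ltnSn.
have Hai : forall i, dle (a i) (cch alpha x k.+1 i) by move=> i; move/forallP: Ha.
case: (boolP (a i0 == D0)) => ha0.
  apply: IH; apply/forallP => i; case: (eqVneq i i0) => [->|ne].
    by rewrite (eqP ha0) /dle eqxx.
  by rewrite -Hc.
have ai0 : a i0 = sgn x i0.
  by move: (Hai i0); rewrite c1 /dle (negbTE ha0) /= => /eqP.
set a' : vec n := [ffun i => if i == i0 then D0 else a i].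
have Ha' : vle a' (cch alpha x k).
  apply/forallP => i; rewrite ffunE; case: (eqVneq i i0) => [_|ne]; first by rewrite /dle eqxx.
  by rewrite -Hc.
have Em : vmeet a (cch alpha x k) = a'.
  apply/ffunP => i; rewrite [LHS]ffunE [RHS]ffunE; case: (eqVneq i i0) => [->|ne]; first by rewrite c0 dmeet_d0.
  by rewrite (dle_meet_join (_ : dle (a i) (cch alpha x k i))).1 // -Hc.
have Ej : forall z, vjoin z a (cch alpha x k) = cch alpha x k.+1.
  move=> z; apply/ffunP => i; rewrite [LHS]ffunE; case: (eqVneq i i0) => [->|ne].
    by rewrite c0 djoin_d0 ai0 c1.
  by rewrite Hc // (dle_meet_join (_ : dle (a i) (cch alpha x k i))).2 // -Hc.
have B := Hf a (cch alpha x k); rewrite Em !Ej in B.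
have IHa := IH a' Ha'.
have Ed : dot alpha (yg alpha f x) a = dot alpha (yg alpha f x) a'
          + (f (cch alpha x k.+1) - f (cch alpha x k)).
  have -> : f (cch alpha x k.+1) - f (cch alpha x k) =
    yg alpha f x i0 * dval alpha (sgn x i0) by rewrite yg_step // pi0.
  rewrite /dot (bigD1 i0) //= [X in _ = X + _](bigD1 i0) //=.
  rewrite ffunE eqxx mulr0 add0r ai0 addrC; congr (_ + _).
  by apply: eq_bigr => i hi; rewrite ffunE (negbTE hi).
rewrite Ed; lra.
Qed.

Lemma greedy_valid (R : realFieldType) (alpha : R) n (f : vec n -> R) (x : 'I_n -> R) :
  0 < alpha -> alpha <= 1 -> bisubmodular alpha f ->
  forall a : vec n, f (vzero n) + dot alpha (yg alpha f x) a <= f a.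
Proof.
move=> ha ha1 Hf a.
set y := yg alpha f x; set t := cch alpha x n; set f0 := f (vzero n).
have tfull : forall i, t i != D0.
  by move=> i; rewrite ffunE pos_lt /sgn; case: ifP.
have Hb : forall b, vle b t -> f0 + dot alpha y b <= f b.
  by move=> b; apply: below_chain.
have Ht : f t = f0 + dot alpha y t by apply: cch_val.
clearbody t.
set e := vjoin D1 a t.
have He1 : vjoin D1 e t = e.
  by apply/ffunP => i; rewrite !ffunE; case: (dle_full (a i) (tfull i)).
have V1 : vle (vmeet e t) t.
  by apply/forallP => i; rewrite !ffunE; case: (dle_full (a i) (tfull i)).
have V2 : vle (vjoin D0 e t) t.
  by apply/forallP => i; rewrite !ffunE; case: (dle_full (a i) (tfull i)).
have V3 : vle (vmeet a t) t.
  by apply/forallP => i; rewrite !ffunE; case: (dle_full (a i) (tfull i)).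
have V4 : vle (vjoin D0 a t) t.
  by apply/forallP => i; rewrite !ffunE; case: (dle_full (a i) (tfull i)).
have B1 := Hf e t; rewrite He1 in B1.
have I1 := dot_lin alpha y e t; rewrite He1 in I1.
have b1 := Hb _ V1; have b2 := Hb _ V2.
have m2 : alpha * (f0 + dot alpha y (vjoin D0 e t)) <= alpha * f (vjoin D0 e t).
  by apply: ler_wpM2l => //; apply: ltW.
have Ee : f0 + dot alpha y e <= f e.
  have : 0 <= alpha * (f e - (f0 + dot alpha y e)) by lra.
  by rewrite pmulr_rge0 // subr_ge0.
have B2 := Hf a t.
have I2 := dot_lin alpha y a t.
have b3 := Hb _ V3; have b4 := Hb _ V4.
have m4 : alpha * (f0 + dot alpha y (vjoin D0 a t)) <= alpha * f (vjoin D0 a t).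
  by apply: ler_wpM2l => //; apply: ltW.
have m5 : (1 - alpha) * (f0 + dot alpha y e) <= (1 - alpha) * f e.
  by apply: ler_wpM2l => //; lra.
rewrite -/e in B2 I2.
lra.
Qed.

Lemma lovasz_eq (R : realFieldType) (alpha : R) n (f : vec n -> R) (x : 'I_n -> R)
  (lam : {ffun vec n -> R}) :
  0 < alpha -> inP alpha x lam -> chain_support lam ->
  lovasz alpha f x = \sum_a lam a * f a.
Proof.
move=> ha H C.
have [H1 C1] : inP alpha x (lambda_x alpha x) /\ chain_support (lambda_x alpha x).
  exact: (epsilon_spec _ (fun l => inP alpha x l /\ chain_support l) (ex_intro _ lam (conj H C))).
by rewrite /lovasz (lam_unique ha H1 C1 H C).
Qed.

Lemma mean_affine (R : realFieldType) (alpha : R) n (x : 'I_n -> R)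
  (lam : {ffun vec n -> R}) (y : 'I_n -> R) (f0 : R) :
  inP alpha x lam ->
  \sum_a lam a * (f0 + dot alpha y a) = f0 + \sum_i y i * x i.
Proof.
case=> _ [Hs Hm].
under eq_bigr => a _ do rewrite mulrDr.
rewrite big_split /= -mulr_suml Hs mul1r; congr (_ + _).
under eq_bigr => a _ do rewrite /dot mulr_sumr.
rewrite exchange_big /=; apply: eq_bigr => i _.
rewrite -Hm mulr_sumr; apply: eq_bigr => a _; ring.
Qed.

Lemma sum_ind (R : realFieldType) n (g : vec n -> R) (a : vec n) :
  \sum_c [ffun c : vec n => ((c == a)%:R : R)] c * g c = g a.
Proof.
under eq_bigr => c _ do rewrite ffunE -(mul1r (_%:R)).
by rewrite sum_delta mul1r.
Qed.

Lemma vertex_val (R : realFieldType) (alpha : R) n (f : vec n -> R) (a : vec n) :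
  0 < alpha -> lovasz alpha f (fun i => dval alpha (a i)) = f a.
Proof.
move=> ha.
pose lam := [ffun c : vec n => ((c == a)%:R : R)].
have H : inP alpha (fun i => dval alpha (a i)) lam.
  split; [|split].
  - by move=> c; rewrite ffunE; case: (c == a) => /=; rewrite ?ler01 ?lexx.
  - rewrite (eq_bigr (fun c => lam c * (fun _ => 1) c)); first exact: (sum_ind (fun _ => 1) a).
    by move=> c _; rewrite mulr1.
  - by move=> i; rewrite (sum_ind (fun c => dval alpha (c i))).
have C : chain_support lam.
  move=> c c'; rewrite !ffunE.
  case: (eqVneq c a) => [->|]; last by rewrite eqxx.
  case: (eqVneq c' a) => [->|]; last by rewrite eqxx.
  by move=> _ _; rewrite /vle; apply/orP; left; apply/forallP => i; exact: dle_refl.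
by rewrite (lovasz_eq f ha H C) sum_ind.
Qed.

Lemma conv_implies_bisub (R : realFieldType) (alpha : R) n (f : vec n -> R) :
  0 < alpha -> alpha <= 1 ->
  convex_on_box alpha (lovasz alpha f) -> bisubmodular alpha f.
Proof.
move=> ha ha1 Hc a b.
set m := vmeet a b; set j0 := vjoin D0 a b; set j1 := vjoin D1 a b.
pose lam := [ffun c : vec n => 2^-1 * (c == m)%:R + alpha / 2 * (c == j0)%:R
                              + (1 - alpha) / 2 * (c == j1)%:R].
have Slam : forall g : vec n -> R, \sum_c lam c * g c =
   2^-1 * g m + alpha / 2 * g j0 + (1 - alpha) / 2 * g j1.
  move=> g; under eq_bigr => c _ do rewrite ffunE 2!mulrDl.
  by rewrite !big_split /= !sum_delta.
have H : inP alpha (fun i => 2^-1 * dval alpha (a i) + (1 - 2^-1) * dval alpha (b i)) lam.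
  split; [|split].
  - move=> c; rewrite ffunE.
    by case: (c == m); case: (c == j0); case: (c == j1); rewrite /= ?mulr1 ?mulr0;
      apply/andP; split; lra.
  - have := Slam (fun _ => 1); under eq_bigr => c _ do rewrite mulr1.
    move=> ->; lra.
  - move=> i; rewrite (Slam (fun c => dval alpha (c i))).
    have := dlin alpha (a i) (b i); rewrite /m /j0 /j1 !ffunE; lra.
have Vmj0 : vle m j0 by apply/forallP => i; rewrite !ffunE; case: (dle_chain3 (a i) (b i)).
have Vmj1 : vle m j1 by apply/forallP => i; rewrite !ffunE; case: (dle_chain3 (a i) (b i)).
have Vj01 : vle j0 j1 by apply/forallP => i; rewrite !ffunE; case: (dle_chain3 (a i) (b i)).
have Vr : forall c : vec n, vle c c by move=> c; apply/forallP => i; exact: dle_refl.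
have Hs : forall c, lam c != 0 -> [|| c == m, c == j0 | c == j1].
  move=> c; apply: contraR; rewrite !negb_or => /and3P [h1 h2 h3].
  by rewrite ffunE (negbTE h1) (negbTE h2) (negbTE h3) !mulr0 !addr0.
have C : chain_support lam.
  move=> c c' /Hs /or3P [] /eqP -> /Hs /or3P [] /eqP ->;
    by rewrite ?Vr ?Vmj0 ?Vmj1 ?Vj01 ?orbT.
have Ez := lovasz_eq f ha H C; rewrite Slam in Ez.
have hxa : in_box alpha (fun i => dval alpha (a i)) by move=> i; exact: dval_bounds.
have hxb : in_box alpha (fun i => dval alpha (b i)) by move=> i; exact: dval_bounds.
have ht : 0 <= (2^-1 : R) <= 1 by apply/andP; split; lra.
have := Hc _ _ _ hxa hxb ht.
rewrite /= Ez !vertex_val //.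
lra.
Qed.

Lemma bisub_implies_conv (R : realFieldType) (alpha : R) n (f : vec n -> R) :
  0 < alpha -> alpha <= 1 ->
  bisubmodular alpha f -> convex_on_box alpha (lovasz alpha f).
Proof.
move=> ha ha1 Hf x w t hx hw /andP [ht0 ht1].
set z := fun i => t * x i + (1 - t) * w i.
have hz : in_box alpha z.
  move=> i; case/andP: (hx i) => hx1 hx2; case/andP: (hw i) => hw1 hw2.
  have h1 : t * - alpha <= t * x i by apply: ler_wpM2l.
  have h2 : t * x i <= t * 1 by apply: ler_wpM2l.
  have h3 : (1 - t) * - alpha <= (1 - t) * w i by apply: ler_wpM2l => //; lra.
  have h4 : (1 - t) * w i <= (1 - t) * 1 by apply: ler_wpM2l => //; lra.
  rewrite /z; apply/andP; split; lra.
set y := yg alpha f z; set f0 := f (vzero n).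
have [Iz Cz] := lamc_inP ha hz.
have Lz : lovasz alpha f z = f0 + \sum_i y i * z i.
  rewrite (lovasz_eq f ha Iz Cz) -(mean_affine y f0 Iz); apply: eq_bigr => a _.
  case: (boolP (lamc alpha z a == 0)) => [/eqP->|/lamc_supp [k ->]].
    by rewrite !mul0r.
  by rewrite (cch_val f z k ha).
have Lb : forall v, in_box alpha v -> f0 + \sum_i y i * v i <= lovasz alpha f v.
  move=> v hv; have [Iv Cv] := lamc_inP ha hv.
  rewrite (lovasz_eq f ha Iv Cv) -(mean_affine y f0 Iv); apply: ler_sum => a _.
  apply: ler_wpM2l; first exact: (inP_ge0 Iv).
  exact: greedy_valid.
have Lx := Lb x hx; have Lw := Lb w hw.
have Sz : \sum_i y i * z i = t * \sum_i y i * x i + (1 - t) * \sum_i y i * w i.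
  rewrite !mulr_sumr -big_split; apply: eq_bigr => i _ /=; rewrite /z; ring.
have m1 : t * (f0 + \sum_i y i * x i) <= t * lovasz alpha f x by apply: ler_wpM2l.
have m2 : (1 - t) * (f0 + \sum_i y i * w i) <= (1 - t) * lovasz alpha f w.
  by apply: ler_wpM2l => //; lra.
rewrite Lz Sz; lra.
Qed.

Theorem lemma2 (R : realFieldType) (alpha : R) (n : nat) (f : vec n -> R) :
  0 < alpha -> alpha <= 1 ->
  (convex_on_box alpha (lovasz alpha f) <-> bisubmodular alpha f).
Proof.
move=> ha ha1; split; [exact: conv_implies_bisub | exact: bisub_implies_conv].
Qed.
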